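(* Consider a generalized Nash equilibrium problem with $N$ players in which the $i$th player, given the other players' strategies $x_{-i}$, solves \[ \min_{x_i\in\mathbb{R}^{n_i}} f_i(x_i,x_{-i})\quad\text{s.t.}\quad g_i(x_i,x_{-i})\ge 0, \] where $f_i$ and the components of $g_i=(g_{i,1},\dots,g_{i,s_i})$ are real polynomials in $x=(x_1,\dots,x_N)\in\mathbb{R}^n$, $n=n_1+\cdots+n_N$. Let $\{x^{(k)}\}$ be a sequence produced by the following Gauss–Seidel scheme: start from a feasible point $x^{(0)}$ and a parameter $\tau^{(0)}>0$; for $k=0,1,2,\dots$ and $i=1,\dots,N$ in order, let $x_i^{(k+1)}$ be a global minimizer of \[ \min_{x_i\in\mathbb{R}^{n_i}}\ f_i(x_1^{(k+1)},\dots,x_{i-1}^{(k+1)},x_i,x_{i+1}^{(k)},\dots,x_N^{(k)})+\tau^{(k)}\|x_i-x_i^{(k)}\|^2 \] subject to $g_i(x_1^{(k+1)},\dots,x_{i-1}^{(k+1)},x_i,x_{i+1}^{(k)},\dots,x_N^{(k)})\ge 0$; then choose $\tau^{(k+1)}\in[0,\tau^{(k)}]$ and set $x^{(k+1)}=(x_1^{(k+1)},\dots,x_N^{(k+1)})$. Assume $x^{(k)}\to x^*$ and $\tau^{(k)}\to 0$. If for each $i$ the set-valued map $G_i: x_{-i}\mapsto X_i(x_{-i})$ is inner semicontinuous relative to its domain $\operatorname{dom}G_i$, then $x^*$ is a generalized Nash equilibrium of the problem.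
   Context: For $x=(x_1,\dots,x_N)$, $x_{-i}$ denotes $(x_1,\dots,x_{i-1},x_{i+1},\dots,x_N)$ and $(y,x_{-i})$ denotes the vector whose $i$th block is $y$ and other blocks are those of $x_{-i}$. The feasible set of player $i$ is $X_i(x_{-i})=\{x_i\in\mathbb{R}^{n_i}: g_i(x_i,x_{-i})\ge 0\}$ (componentwise inequality). A generalized Nash equilibrium (GNE) is a point $x$ such that for each $i$, $x_i$ is a minimizer of player $i$'s problem with $x_{-i}$ fixed. The domain of $G_i$ is the set of $x_{-i}$ with $X_i(x_{-i})\neq\emptyset$. A set-valued map $G$ is inner semicontinuous at $z\in\operatorname{dom}G$ relative to $\operatorname{dom}G$ if for every $w\in G(z)$ and every sequence $z_\ell\in\operatorname{dom}G$ with $z_\ell\to z$ there exist $w_\ell\in G(z_\ell)$ with $w_\ell\to w$; it is inner semicontinuous relative to $\operatorname{dom}G$ if this holds at all points of $\operatorname{dom}G$. *)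

(* Defs.v *)
From HB Require Import structures.
From mathcomp Require Import all_boot all_order all_algebra.
From mathcomp Require Import all_classical all_reals all_analysis.
Unset Printing Implicit Defensive.
Import Order.TTheory GRing.Theory Num.Theory.
Import numFieldNormedType.Exports.
Local Open Scope classical_set_scope.
Local Open Scope ring_scope.

Section GNEP.
Variables (R : realType) (N : nat) (dims : 'I_N -> nat).

Definition profile := forall i : 'I_N, 'rV[R]_(dims i).

Definition repl (x : profile) (i : 'I_N) (y : 'rV[R]_(dims i)) : profile :=
  @dfwith _ (fun j : 'I_N => 'rV[R]_(dims j)) x i y.

Inductive is_poly : (profile -> R) -> Prop :=
  | poly_const (c : R) : is_poly (fun _ => c)
  | poly_coord (i : 'I_N) (j : 'I_(dims i)) : is_poly (fun x => x i 0 j)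
  | poly_add p q : is_poly p -> is_poly q -> is_poly (fun x => p x + q x)
  | poly_mul p q : is_poly p -> is_poly q -> is_poly (fun x => p x * q x).

Definition sqnorm {m : nat} (v : 'rV[R]_m) : R := \sum_(j < m) (v 0 j) ^+ 2.

Variables (s : 'I_N -> nat) (g : forall i : 'I_N, 'I_(s i) -> profile -> R).

Definition feasible_at (i : 'I_N) (x : profile) : Prop :=
  forall l : 'I_(s i), 0 <= g i l x.

(* G_i(x_{-i}) = X_i(x_{-i}); the i-th block of z is ignored *)
Definition Gmap (i : 'I_N) (z : profile) : set 'rV[R]_(dims i) :=
  [set y | feasible_at i (repl z i y)].

Definition in_dom (i : 'I_N) (z : profile) : Prop := exists y, Gmap i z y.

(* convergence of vectors, componentwise (= norm convergence in R^m) *)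
Definition vcvg (m : nat) (u : nat -> 'rV[R]_m) (v : 'rV[R]_m) : Prop :=
  forall j : 'I_m, (fun k => u k 0 j) @ \oo --> v 0 j.

Arguments vcvg {m}.

Definition pcvg (u : nat -> profile) (x : profile) : Prop :=
  forall i : 'I_N, vcvg (fun k => u k i) (x i).

Definition pcvg_except (i : 'I_N) (u : nat -> profile) (x : profile) : Prop :=
  forall j : 'I_N, j != i -> vcvg (fun k => u k j) (x j).

Definition isc_rel_dom (i : 'I_N) : Prop :=
  forall z : profile, in_dom i z ->
  forall w, Gmap i z w ->
  forall zs : nat -> profile, (forall l, in_dom i (zs l)) -> pcvg_except i zs z ->
  exists ws : nat -> 'rV[R]_(dims i), (forall l, Gmap i (zs l) (ws l)) /\ vcvg ws w.

Variable (f : 'I_N -> profile -> R).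

Definition is_GNE (x : profile) : Prop :=
  forall i : 'I_N, Gmap i x (x i) /\
    forall y, Gmap i x y -> f i x <= f i (repl x i y).

Definition gs_mixed (x : nat -> profile) (k : nat) (i : 'I_N) : profile :=
  fun j => if (j < i)%N then x k.+1 j else x k j.

Definition gauss_seidel_seq (x : nat -> profile) (tau : nat -> R) : Prop :=
  (forall i, feasible_at i (x 0%N)) /\ 0 < tau 0%N /\
  (forall k, 0 <= tau k.+1 <= tau k) /\
  (forall k (i : 'I_N),
     let z := gs_mixed x k i in
     Gmap i z (x k.+1 i) /\
     forall y, Gmap i z y ->
       f i (repl z i (x k.+1 i)) + tau k * sqnorm (x k.+1 i - x k i)
       <= f i (repl z i y) + tau k * sqnorm (y - x k i)).

End GNEP.

Arguments profile R {N} dims.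
Arguments is_poly {R N dims}.
Arguments feasible_at {R N dims s}.
Arguments Gmap {R N dims s}.
Arguments in_dom {R N dims s}.
Arguments isc_rel_dom {R N dims s}.
Arguments is_GNE {R N dims s}.
Arguments gauss_seidel_seq {R N dims s}.
Arguments pcvg {R N dims}.
Arguments vcvg {R m}.

(* Main.v *)
Require Import Defs.
From HB Require Import structures.
From mathcomp Require Import all_boot all_order all_algebra.
From mathcomp Require Import all_classical all_reals all_analysis.
Import Order.TTheory GRing.Theory Num.Theory.
Import numFieldNormedType.Exports.
Local Open Scope classical_set_scope.
Local Open Scope ring_scope.
Arguments repl {R N dims}.
Arguments gs_mixed {R N dims}.

Lemma cvg_sumr (R : realType) (I : Type) (r : seq I) (F : I -> nat -> R) (L : I -> R) :
  (forall i, F i k @[k --> \oo] --> L i) ->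
  (\sum_(i <- r) F i k) @[k --> \oo] --> \sum_(i <- r) L i.
Proof.
move=> hF; elim: r => [|a r IH].
  under eq_fun do rewrite big_nil. rewrite big_nil; exact: cvg_cst.
under eq_fun do rewrite big_cons. rewrite big_cons.
exact: (cvgD (hF a) IH).
Qed.

Lemma sqnorm_cvg {R : realType} {m : nat} {u : nat -> 'rV[R]_m} {a} :
  vcvg u a -> sqnorm R (u k) @[k --> \oo] --> sqnorm R a.
Proof.
move=> hu; rewrite /sqnorm.
apply: (@cvg_sumr R _ _ (fun j k => u k 0 j ^+ 2)) => j.
under eq_fun do rewrite expr2. rewrite expr2.
exact: (cvgM (hu j) (hu j)).
Qed.

Lemma vcvgB {R : realType} {m : nat} {u v : nat -> 'rV[R]_m} {a b} :
  vcvg u a -> vcvg v b -> vcvg (fun k => u k - v k) (a - b).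
Proof.
move=> hu hv j.
have -> : (fun k => (u k - v k) 0 j) = fun k => u k 0 j - v k 0 j.
  by apply: funext => k; rewrite !mxE.
rewrite !mxE; exact: (cvgB (hu j) (hv j)).
Qed.

Lemma poly_cvg {R : realType} {N : nat} {dims : 'I_N -> nat} {p : profile R dims -> R} :
  is_poly p -> forall u xs, pcvg u xs -> p (u k) @[k --> \oo] --> p xs.
Proof.
elim=> [c|i j|p1 q _ IHp _ IHq|p1 q _ IHp _ IHq] u xs hu.
- exact: cvg_cst.
- exact: (hu i j).
- exact: (cvgD (IHp u xs hu) (IHq u xs hu)).
- exact: (cvgM (IHp u xs hu) (IHq u xs hu)).
Qed.

Lemma repl_self {R : realType} {N : nat} {dims : 'I_N -> nat} (z : profile R dims) i :
  repl z i (z i) = z.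
Proof.
apply: functional_extensionality_dep => j.
case: (eqVneq i j) => [<-|ne]; first by rewrite /repl dfwithin.
by rewrite /repl dfwithout.
Qed.

Lemma repl_cvg {R : realType} {N : nat} {dims : 'I_N -> nat} i
  (u : nat -> profile R dims) z (v : nat -> 'rV[R]_(dims i)) y :
  (forall j, j != i -> vcvg (fun k => u k j) (z j)) -> vcvg v y ->
  pcvg (fun k => repl (u k) i (v k)) (repl z i y).
Proof.
move=> hu hv j.
case: (eqVneq i j) => [<-|ne].
  have -> : (fun k => repl (u k) i (v k) i) = v.
    by apply: funext => k; rewrite /repl dfwithin.
  by rewrite /repl dfwithin.
have -> : (fun k => repl (u k) i (v k) j) = fun k => u k j.
  by apply: funext => k; rewrite /repl dfwithout.
rewrite /repl dfwithout //; apply: hu; by rewrite eq_sym.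
Qed.

Theorem theorem3p7 (R : realType) (N : nat) (dims : 'I_N -> nat)
  (f : 'I_N -> profile R dims -> R)
  (s : 'I_N -> nat) (g : forall i : 'I_N, 'I_(s i) -> profile R dims -> R)
  (x : nat -> profile R dims) (tau : nat -> R) (xs : profile R dims) :
  (forall i, is_poly (f i)) ->
  (forall i (l : 'I_(s i)), is_poly (g i l)) ->
  gauss_seidel_seq g f x tau ->
  pcvg x xs ->
  tau @ \oo --> 0 ->
  (forall i, isc_rel_dom g i) ->
  is_GNE g f xs.
Proof.
move=> hf hg [_ [tau0 [taumon hstep]]] hx htau hisc i.
have zcvg : forall j, vcvg (fun k => gs_mixed x k i j) (xs j).
  move=> j c; rewrite /gs_mixed /=; case: (j < i)%N; last exact: (hx j c).
  have := hx j c; rewrite -(cvg_shiftS (fun k => x k j 0 c)); exact.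
have xscvg : vcvg (fun k => x k.+1 i) (xs i).
  move=> c; have := hx i c; rewrite -(cvg_shiftS (fun k => x k i 0 c)); exact.
have pz : pcvg (fun k => repl (gs_mixed x k i) i (x k.+1 i)) xs.
  rewrite -{1}(repl_self xs i); apply: repl_cvg => // j _; exact: zcvg.
have tau_ge0 : forall k, 0 <= tau k.
  by case=> [|k]; [exact: ltW | case/andP: (taumon k)].
split.
  move=> l; rewrite (repl_self xs i).
  apply: (ler_cvg_to (cvg_cst (0:R)) (poly_cvg (hg i l) _ _ pz)).
  apply: nearW => k; exact: ((hstep k i).1 l).
move=> y hy.
have [ws [hws wcvg]] := hisc i xs (ex_intro _ y hy) y hy (fun k => gs_mixed x k i)
  (fun l => ex_intro _ (x l.+1 i) (hstep l i).1) (fun j _ => zcvg j).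
have qz : pcvg (fun k => repl (gs_mixed x k i) i (ws k)) (repl xs i y).
  apply: repl_cvg => // j _; exact: zcvg.
have sq : sqnorm R (ws k - x k i) @[k --> \oo] --> sqnorm R (y - xs i).
  exact: (sqnorm_cvg (vcvgB wcvg (hx i))).
have c1 : f i (repl (gs_mixed x k i) i (x k.+1 i)) @[k --> \oo] --> f i xs.
  by have := poly_cvg (hf i) _ _ pz.
have c2 : f i (repl (gs_mixed x k i) i (ws k)) @[k --> \oo] --> f i (repl xs i y).
  by have := poly_cvg (hf i) _ _ qz.
have c3 : (tau k * sqnorm R (ws k - x k i)) @[k --> \oo] --> 0 * sqnorm R (y - xs i).
  exact: (cvgM htau sq).
have c4 : (f i (repl (gs_mixed x k i) i (ws k)) + tau k * sqnorm R (ws k - x k i))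
   @[k --> \oo] --> f i (repl xs i y) + 0 * sqnorm R (y - xs i).
  exact: (cvgD c2 c3).
have := ler_cvg_to c1 c4.
rewrite mul0r addr0; apply.
apply: nearW => k /=.
have := (hstep k i).2 (ws k) (hws k).
apply: le_trans; rewrite lerDl; apply: mulr_ge0 => //.
by apply: sumr_ge0 => j _; exact: sqr_ge0.
Qed.
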